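(* Let $\mathbf q=(r_1^{x_1})\in\mathbb Z_{\ge1}^{x_1}$, i.e. $\mathbf q$ consists of $x_1\ge1$ copies of a single positive integer $r_1$. If $\Delta_{(1,\mathbf q)}$ is reflexive and has the integer decomposition property, then $r_1=1$, i.e. $\mathbf q=(1,1,\dots,1)$.
   Context: For $\mathbf q=(q_1,\dots,q_n)\in\mathbb Z_{\ge1}^n$ with $q_1\le\cdots\le q_n$, let $\Delta_{(1,\mathbf q)}=\mathrm{conv}\{e_1,\dots,e_n,-\sum_{i=1}^n q_ie_i\}\subset\mathbb R^n$. A lattice polytope $P\subset\mathbb R^n$ has the integer decomposition property (IDP) if for every integer $m\ge1$, every point of $mP\cap\mathbb Z^n$ is a sum of $m$ points of $P\cap\mathbb Z^n$. A lattice polytope is reflexive if, after translation by an integer vector, the origin lies in its interior and its polar dual is also a lattice polytope; it is known that $\Delta_{(1,\mathbf q)}$ is reflexive if and only if $q_i$ divides $1+\sum_{j=1}^n q_j$ for every $i$. The notation $(r_1^{x_1})$ denotes the vector consisting of $x_1$ copies of $r_1$. *)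

(* Defs.v *)
From mathcomp Require Import all_boot all_order all_algebra.
Set Implicit Arguments. Unset Strict Implicit. Unset Printing Implicit Defensive.
Import Order.TTheory GRing.Theory Num.Theory.
Local Open Scope ring_scope.

(* Points of R^n are rational row vectors 'rV[rat]_n (all polytopes here are
   rational, so rational points suffice). *)

Definition is_lattice (n : nat) (x : 'rV[rat]_n) : Prop :=
  exists z : 'rV[int]_n, x = map_mx (fun a : int => a%:~R) z.

Definition in_conv (n k : nat) (V : 'I_k -> 'rV[rat]_n) (x : 'rV[rat]_n) : Prop :=
  exists l : 'I_k -> rat,
    (forall i, 0 <= l i) /\ \sum_i l i = 1 /\ x = \sum_i l i *: V i.

Definition in_dil (n k : nat) (V : 'I_k -> 'rV[rat]_n) (m : nat) (x : 'rV[rat]_n) : Prop :=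
  in_conv V ((m%:R)^-1 *: x).

Definition IDP (n k : nat) (V : 'I_k -> 'rV[rat]_n) : Prop :=
  forall m : nat, (1 <= m)%N -> forall x : 'rV[rat]_n,
    is_lattice x -> in_dil V m x ->
    exists ys : 'I_m -> 'rV[rat]_n,
      (forall j, is_lattice (ys j) /\ in_conv V (ys j)) /\ x = \sum_j ys j.

Definition dotv (n : nat) (x y : 'rV[rat]_n) : rat := \sum_i x 0 i * y 0 i.

Definition origin_interior (n k : nat) (V : 'I_k -> 'rV[rat]_n) : Prop :=
  exists e : rat, 0 < e /\
    forall y : 'rV[rat]_n, (forall i, `|y 0 i| <= e) -> in_conv V y.

Definition in_polar (n k : nat) (V : 'I_k -> 'rV[rat]_n) (y : 'rV[rat]_n) : Prop :=
  forall x, in_conv V x -> -1 <= dotv x y.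

Definition is_lattice_polytope (n : nat) (S : 'rV[rat]_n -> Prop) : Prop :=
  exists (k : nat) (W : 'I_k -> 'rV[rat]_n),
    (forall j, is_lattice (W j)) /\ forall y, S y <-> in_conv W y.

Definition reflexive_polytope (n k : nat) (V : 'I_k -> 'rV[rat]_n) : Prop :=
  exists t : 'rV[rat]_n, is_lattice t /\
    origin_interior (fun i => V i - t) /\
    is_lattice_polytope (in_polar (fun i => V i - t)).

(* vertices of Delta_(1,q) = conv{e_1,...,e_n, -sum q_i e_i}:
   index i < n gives e_i, index n gives -sum_i q_i e_i *)
Definition delta_vert (n : nat) (q : 'I_n -> nat) (i : 'I_n.+1) : 'rV[rat]_n :=
  \row_(j < n) (if (i : nat) == n then - (q j)%:R
                else if (i : nat) == (j : nat) then 1 else 0).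

(* Main.v *)
Require Import Defs.
From mathcomp Require Import all_boot all_order all_algebra.
From mathcomp Require Import ring lra zify.
Set Implicit Arguments. Unset Strict Implicit. Unset Printing Implicit Defensive.
Import Order.TTheory GRing.Theory Num.Theory.
Local Open Scope ring_scope.

Lemma dotv_sumZl n k (l : 'I_k -> rat) (U : 'I_k -> 'rV[rat]_n) y :
  dotv (\sum_i l i *: U i) y = \sum_i l i * dotv (U i) y.
Proof.
rewrite /dotv.
under eq_bigr => j _ do rewrite summxE big_distrl /=.
rewrite exchange_big /=; apply: eq_bigr => i _.
rewrite big_distrr /=; apply: eq_bigr => j _; by rewrite mxE mulrA.
Qed.

Lemma dotv_sumZr n k (l : 'I_k -> rat) (U : 'I_k -> 'rV[rat]_n) y :
  dotv y (\sum_i l i *: U i) = \sum_i l i * dotv y (U i).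
Proof.
rewrite /dotv.
under eq_bigr => j _ do rewrite summxE big_distrr /=.
rewrite exchange_big /=; apply: eq_bigr => i _.
rewrite big_distrr /=; apply: eq_bigr => j _; rewrite mxE; ring.
Qed.

Lemma dotvBl n (x z y : 'rV[rat]_n) : dotv (x - z) y = dotv x y - dotv z y.
Proof. rewrite /dotv -sumrB; apply: eq_bigr => i _; by rewrite !mxE mulrBl. Qed.

Lemma dotvZr n (x z : 'rV[rat]_n) a : dotv x (a *: z) = a * dotv x z.
Proof. rewrite /dotv big_distrr; apply: eq_bigr => i _; by rewrite !mxE mulrCA. Qed.

Lemma polar_vert n k (U : 'I_k -> 'rV[rat]_n) y :
  (forall i, -1 <= dotv (U i) y) -> in_polar U y.
Proof.
move=> H x [l [l0 [l1 ->]]]; rewrite dotv_sumZl.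
have -> : -1 = \sum_i l i * (-1) :> rat by rewrite -big_distrl /= l1 mul1r.
by apply: ler_sum => i _; apply: ler_wpM2l.
Qed.

Lemma conv_vert n k (V : 'I_k -> 'rV[rat]_n) j : in_conv V (V j).
Proof.
exists (fun j' => (j' == j)%:R); split; first by move=> j'; case: (j' == j).
split; first by rewrite (bigD1 j) //= eqxx big1 ?addr0 // => j' /negbTE ->.
rewrite (bigD1 j) //= eqxx scale1r big1 ?addr0 // => j' /negbTE ->.
by rewrite scale0r.
Qed.

Lemma tight_lattice n k (U : 'I_k -> 'rV[rat]_n) (T : pred 'I_k) y :
  is_lattice_polytope (in_polar U) -> in_polar U y ->
  (forall i, T i -> dotv (U i) y = -1) ->
  exists w, is_lattice w /\ in_polar U w /\ forall i, T i -> dotv (U i) w = -1.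
Proof.
move=> [K [W [WL HW]]] Py Ty.
have [l [l0 [l1 ey]]] := (HW y).1 Py.
have PW : forall j, in_polar U (W j) by move=> j; apply/(HW _).2; apply: conv_vert.
case: (pickP (fun j => l j != 0)) => [j ljn|H]; last first.
  move: l1; rewrite big1 => [|j _]; last by move: (H j) => /= /negbFE/eqP.
  by move=> /eqP; rewrite eq_sym oner_eq0.
exists (W j); split; first exact: WL.
split; first exact: PW.
move=> i Ti.
have ge : forall j', 0 <= l j' * (dotv (U i) (W j') + 1).
  move=> j'; apply: mulr_ge0 => //; rewrite -lerBlDr sub0r; apply: PW; apply: conv_vert.
have s0 : \sum_j' l j' * (dotv (U i) (W j') + 1) = 0.
  under eq_bigr => j' _ do rewrite mulrDr mulr1.
  rewrite big_split /= l1 -dotv_sumZr -ey Ty //; ring.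
have := @psumr_eq0P _ _ predT _ (fun j0 _ => ge j0) s0 j (erefl true).
move/eqP; rewrite mulf_eq0 (negbTE ljn) /= addr_eq0 => /eqP //.
Qed.
Lemma dot_e n (q : 'I_n -> nat) (j : 'I_n) y :
  dotv (delta_vert q (lift ord_max j)) y = y 0 j.
Proof.
rewrite /dotv (bigD1 j) //= big1 ?addr0.
  by rewrite mxE lift_max /= (ltn_eqF (ltn_ord j)) eqxx mul1r.
move=> j' /negbTE nj; rewrite mxE lift_max /= (ltn_eqF (ltn_ord j)).
by rewrite eq_sym (inj_eq val_inj) nj mul0r.
Qed.

Lemma dot_v n (q : 'I_n -> nat) y :
  dotv (delta_vert q ord_max) y = - \sum_j (q j)%:R * y 0 j.
Proof.
rewrite /dotv -sumrN; apply: eq_bigr => j _; by rewrite mxE /= eqxx mulNr.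
Qed.

Lemma lat_coord n (x : 'rV[rat]_n) : is_lattice x -> exists z : 'I_n -> int, forall j, x 0 j = (z j)%:~R.
Proof. by move=> [z ->]; exists (fun j => z 0 j) => j; rewrite mxE. Qed.

Lemma dot_int n (x y : 'rV[rat]_n) (a b : 'I_n -> int) :
  (forall j, x 0 j = (a j)%:~R) -> (forall j, y 0 j = (b j)%:~R) ->
  dotv x y = (\sum_j a j * b j)%:~R.
Proof.
move=> ha hb; rewrite /dotv rmorph_sum; apply: eq_bigr => j _.
by rewrite ha hb rmorphM.
Qed.
Lemma alg (ti A P SW zwi M r c : int) : P = ti*zwi + A*(P-1) -> SW = zwi + M*(P-1) -> r*SW + P = 1 -> c = (1 + (1+M)*r)*ti + r - r*(ti + A) -> 2 <= c -> False.
Proof.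
move=> e1 e2 e3 ec c2.
have hP : P = 1 - r*SW by lia.
subst P.
have hz : zwi = SW - M*(1 - r*SW - 1) by lia.
subst zwi. subst c.
have h : ((1 + (1+M)*r)*ti + r - r*(ti + A)) * SW = 1 by lia.
set c := (X in X * SW) in h c2.
have [hs|hs] := lerP SW 0; nia.
Qed.

Lemma main n r : (1 <= n)%N -> (2 <= r)%N ->
  reflexive_polytope (delta_vert (fun _ : 'I_n => r)) -> False.
Proof.
move=> n1 r2 [t [tL [_ LP]]].
set q := fun _ : 'I_n => r.
set U := fun i => delta_vert q i - t.
have [zt ht] := lat_coord tL.
set s := \sum_j zt j.
have dotUe : forall j y, dotv (U (lift ord_max j)) y = y 0 j - dotv t y.
  by move=> j y; rewrite /U dotvBl dot_e.
have dotUv : forall y, dotv (U ord_max) y = - r%:R * \sum_j y 0 j - dotv t y.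
  by move=> y; rewrite /U dotvBl dot_v mulNr mulr_sumr.
have dott : forall y, dotv t y = \sum_j (zt j)%:~R * y 0 j.
  by move=> y; apply: eq_bigr => j _; rewrite ht.
have sR : \sum_j (zt j)%:~R = s%:~R :> rat by rewrite rmorph_sum.
have [sneg | spos] := ltrP s 0.
- pose d : rat := (1 - s%:~R)^-1.
  have hs : (s%:~R : rat) < 0 by rewrite ltrz0.
  have dpos : 0 < d by rewrite /d invr_gt0; lra.
  have dd : d * (1 - s%:~R) = 1 by rewrite /d mulVf //; apply/eqP; lra.
  have dtc : forall c, dotv t (const_mx c) = c * s%:~R.
    move=> c; rewrite dott -sR mulr_sumr; apply: eq_bigr => j _; rewrite mxE mulrC //.
  have Pc : in_polar U (const_mx (- d)).
    apply: polar_vert => i; case: (unliftP ord_max i) => [j ->|->].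
      rewrite dotUe dtc mxE; nra.
    rewrite dotUv dtc.
    under eq_bigr => j _ do rewrite mxE.
    rewrite sumr_const card_ord.
    have : 0 <= r%:R * n%:R * d :> rat by apply: mulr_ge0; [apply: mulr_ge0 | apply: ltW].
    rewrite -mulr_natr; nra.
  have Ty : forall i, i != ord_max -> dotv (U i) (const_mx (- d)) = -1.
    move=> i; case: (unliftP ord_max i) => [j ->|->]; last by rewrite eqxx.
    move=> _; rewrite dotUe dtc mxE; nra.
  have [w [wL [_ wT]]] := tight_lattice LP Pc Ty.
  have [zw hw] := lat_coord wL.
  set P := \sum_j zt j * zw j.
  have dtw : dotv t w = P%:~R by apply: dot_int.
  have ew : forall j, zw j = P - 1.
    move=> j; have hj : lift ord_max j != ord_max by rewrite eq_sym neq_lift.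
    have := wT _ hj.
    rewrite dotUe dtw hw => /eqP; rewrite -intrB -(rmorphN1 intr) => /eqP /intr_inj.
    lia.
  have : P = s * (P - 1).
    by rewrite /P /s mulr_suml; apply: eq_bigr => j _; rewrite ew.
  move=> hP; have e1 : (P - 1) * (1 - s) = -1 by rewrite mulrBr mulr1 mulrC -hP; ring.
  have [hp|hp] := lerP 1 P; nia.
- pose c j : int := (1 + (n * r)%N%:Z) * zt j + r%:Z - r%:Z * s.
  have sc : \sum_j c j = s + (n * r)%N%:Z.
    rewrite /c big_split /= big_split /= -mulr_sumr sumrN -mulr_sumr.
    rewrite !sumr_const card_ord -/s. have h1 : forall x : int, x *+ n = x * n%:Z by move=> x; rewrite -mulr_natr natz.
    rewrite PoszM !h1; ring.
  have [i ci] : exists i, 2 <= c i.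
    case: (pickP (fun i => 2 <= c i)) => [i hi|H]; first by exists i.
    have : \sum_j c j <= \sum_(j < n) 1.
      by apply: ler_sum => j _; move: (H j) => /= /negbT; rewrite -ltNge; lia.
    rewrite sc sumr_const card_ord natz PoszM; nia.
  pose C : rat := (c i)%:~R.
  have Cpos : 0 < C by rewrite /C ltr0z; lia.
  pose K : rat := 1 + (n * r)%:R.
  pose T : rat := (zt i)%:~R.
  pose S : rat := s%:~R.
  have hC : C = K * T + r%:R - r%:R * S.
    by rewrite /C /c /K /T /S intrB intrD !intrM intrD.
  pose z : 'rV[rat]_n := \row_j ((j == i)%:R * K - r%:R).
  have dtz : dotv t z = K * T - r%:R * S.
    rewrite dott /T /S -sR mulr_sumr.
    under eq_bigr => j _ do rewrite mxE mulrBr.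
    rewrite sumrB (bigD1 i) //= eqxx mul1r big1 ?addr0; last first.
      by move=> j /negbTE ->; rewrite mul0r mulr0.
    by congr (_ - _); [rewrite mulrC | apply: eq_bigr => j _; rewrite mulrC].
  have sz : \sum_j z 0 j = 1.
    under eq_bigr => j _ do rewrite mxE.
    rewrite sumrB (bigD1 i) //= eqxx mul1r big1 ?addr0; last first.
      by move=> j /negbTE ->; rewrite mul0r.
    by rewrite sumr_const card_ord /K -[r%:R *+ n]mulr_natr -natrM mulnC addrK.
  have Cn0 : C != 0 by rewrite gt_eqF.
  have Pz : in_polar U (C^-1 *: z).
    apply: polar_vert => k; rewrite dotvZr.
    case: (unliftP ord_max k) => [j ->|->].
      rewrite dotUe dtz mxE.
      have [eji|ji] := eqVneq (j : 'I_n) i.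
        rewrite mul1r.
        have -> : K - r%:R - (K * T - r%:R * S) = K - C by rewrite hC; ring.
        rewrite mulrBr mulVf // lerBrDr addrC subrr.
        by apply: mulr_ge0; [rewrite invr_ge0 ltW | rewrite /K addr_ge0].
      rewrite mul0r.
      have -> : 0 - r%:R - (K * T - r%:R * S) = - C by rewrite hC; ring.
      by rewrite mulrN mulVf.
    rewrite dotUv sz dtz.
    have -> : - r%:R * 1 - (K * T - r%:R * S) = - C by rewrite hC; ring.
    by rewrite mulrN mulVf.
  have Ty : forall k, k != lift ord_max i -> dotv (U k) (C^-1 *: z) = -1.
    move=> k; case: (unliftP ord_max k) => [j ->|->] hk; rewrite dotvZr.
      rewrite dotUe dtz mxE.
      have [eji|ji] := eqVneq (j : 'I_n) i.
        by move: hk; rewrite -(inj_eq val_inj) /= (congr1 val eji) eqxx.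
      rewrite mul0r.
      have -> : 0 - r%:R - (K * T - r%:R * S) = - C by rewrite hC; ring.
      by rewrite mulrN mulVf.
    rewrite dotUv sz dtz.
    have -> : - r%:R * 1 - (K * T - r%:R * S) = - C by rewrite hC; ring.
    by rewrite mulrN mulVf.
  have [w [wL [_ wT]]] := tight_lattice LP Pz Ty.
  have [zw hw] := lat_coord wL.
  set P := \sum_j zt j * zw j.
  have dtw : dotv t w = P%:~R by apply: dot_int.
  have ew : forall j, j != i -> zw j = P - 1.
    move=> j ji; have hj : lift ord_max j != lift ord_max i.
      by rewrite (inj_eq (@lift_inj _ ord_max)).
    have := wT _ hj.
    rewrite dotUe dtw hw => /eqP; rewrite -intrB -(rmorphN1 intr) => /eqP /intr_inj.
    lia.
  set SW := \sum_j zw j.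
  have e3 : r%:Z * SW + P = 1.
    have hm : ord_max != lift ord_max i by rewrite neq_lift.
    have := wT _ hm.
    rewrite dotUv dtw.
    have -> : \sum_j w 0 j = SW%:~R.
      by rewrite /SW rmorph_sum; apply: eq_bigr => j _; rewrite hw.
    move=> h; apply: (@intr_inj rat); rewrite intrD intrM /=; move: h.
    by rewrite mulNr => /eqP; rewrite -opprD eqr_opp => /eqP ->.
  have eP : P = zt i * zw i + (\sum_(j | j != i) zt j) * (P - 1).
    rewrite {1}/P (bigD1 i) //= mulr_suml; congr (_ + _).
    by apply: eq_bigr => j ji; rewrite ew.
  have eS : SW = zw i + (\sum_(j | j != i) (1:int)) * (P - 1).
    rewrite {1}/SW (bigD1 i) //= mulr_suml; congr (_ + _).
    by apply: eq_bigr => j ji; rewrite ew // mul1r.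
  have es : s = zt i + \sum_(j | j != i) zt j by rewrite /s (bigD1 i).
  have en : n%:Z = 1 + \sum_(j | j != i) (1:int).
    have : \sum_(j < n) (1:int) = n%:Z by rewrite sumr_const card_ord natz.
    by rewrite (bigD1 i).
  apply: (alg eP eS e3 _ ci).
  by rewrite /c PoszM en es.
Qed.

Theorem proposition3p4 (x1 r1 : nat) :
  (1 <= x1)%N -> (1 <= r1)%N ->
  reflexive_polytope (delta_vert (fun _ : 'I_x1 => r1)) ->
  IDP (delta_vert (fun _ : 'I_x1 => r1)) ->
  r1 = 1%N.
Proof.
move=> n1 r1p R _.
case: (ltnP 1 r1) => [r2|r1le]; last by apply/eqP; rewrite eqn_leq r1le r1p.
by case: (main n1 r2 R).
Qed.
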